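(* For every integer $a \ge 2$ and every $b \in \mathbb{N}$, $R_\mathrm{cyc}(C_a^\mathrm{mon}, P_b^\mathrm{mon}) = 1 + (a-1)(b-1)$.
   Context: All graphs are finite, simple and undirected, and a graph of order $n$ has vertex set $\{0,1,\ldots,n-1\}$; $K_n$ is the complete graph on $\{0,\ldots,n-1\}$. A $2$-edge-coloring of $K_n$ assigns each edge a color in $\{1,2\}$. For a graph $H$ and such a coloring, an embedding of $H$ in color $j$ is an injective map $\varphi\colon V(H)\to V(K_n)$ such that for every edge $uv$ of $H$ the edge $\{\varphi(u),\varphi(v)\}$ has color $j$; it is increasing up to a cyclic permutation if there exists $t\in V(H)$ such that $(\varphi(t),\ldots,\varphi(|H|-1),\varphi(0),\ldots,\varphi(t-1))$ is increasing. The cyclic Ramsey number $R_\mathrm{cyc}(H_1,H_2)$ is the smallest $n$ such that every $2$-edge-coloring of $K_n$ admits an embedding of $H_1$ in color $1$ or of $H_2$ in color $2$ that is increasing up to a cyclic permutation. The monotone path $P_n^\mathrm{mon}$ has edges $\{i,i+1\}$, $0\le i\le n-2$. For $n\ge3$ the monotone cycle $C_n^\mathrm{mon}$ is $P_n^\mathrm{mon}$ plus the edge $\{0,n-1\}$; by convention $C_2^\mathrm{mon}=K_2$. *)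

(* Defs.v *)
From mathcomp Require Import all_boot.
Unset Printing Implicit Defensive.

Record graph := Graph { gorder : nat; gadj : rel (ordinal gorder) }.
Arguments Graph : clear implicits.

Definition two_coloring (n : nat) (c : 'I_n -> 'I_n -> nat) : Prop :=
  (forall i j, c i j = c j i) /\
  (forall i j, i != j -> c i j = 1 \/ c i j = 2).

Definition embedding (H : graph) (n : nat) (c : 'I_n -> 'I_n -> nat)
    (j : nat) (phi : 'I_(gorder H) -> 'I_n) : Prop :=
  injective phi /\ (forall u v, gadj H u v -> c (phi u) (phi v) = j).

Definition cyc_increasing (h n : nat) (phi : 'I_h -> 'I_n) : Prop :=
  exists t : 'I_h,
    sorted ltn [seq nat_of_ord (phi i) | i <- rot t (enum 'I_h)].

Definition cyc_ramsey_prop (H1 H2 : graph) (n : nat) : Prop :=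
  forall c : 'I_n -> 'I_n -> nat, two_coloring n c ->
    (exists phi, embedding H1 n c 1 phi /\ cyc_increasing (gorder H1) n phi) \/
    (exists phi, embedding H2 n c 2 phi /\ cyc_increasing (gorder H2) n phi).

Definition is_Rcyc (H1 H2 : graph) (N : nat) : Prop :=
  cyc_ramsey_prop H1 H2 N /\ (forall m, m < N -> ~ cyc_ramsey_prop H1 H2 m).

Definition mon_path (n : nat) : graph :=
  @Graph n (fun i j : 'I_n => (i.+1 == j :> nat) || (j.+1 == i :> nat)).

Definition mon_cycle (n : nat) : graph :=
  @Graph n (fun i j : 'I_n =>
    if n == 2 then i != j
    else [|| (i.+1 == j :> nat), (j.+1 == i :> nat),
             (i == 0 :> nat) && (j == n.-1 :> nat)
           | (j == 0 :> nat) && (i == n.-1 :> nat)]).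

(* Main.v *)
Require Import Defs.
From mathcomp Require Import all_boot zify.

Lemma seq_incr h n (s : seq 'I_n) x0 (t : 'I_h) : val t = 0 -> size s = h ->
  sorted ltn (map val s) -> cyc_increasing h n (fun i => nth x0 s i).
Proof.
move=> ht hs hso; exists t; rewrite ht rot0.
have -> : [seq val (nth x0 s i) | i : 'I_h <- enum 'I_h] = map val s.
  rewrite -[in RHS](mkseq_nth x0 s) hs /mkseq -val_enum_ord -!map_comp.
  by [].
exact: hso.
Qed.

Lemma seq_inj h n (s : seq 'I_n) x0 : size s = h -> uniq s ->
  injective (fun i : 'I_h => nth x0 s i).
Proof.
move=> hs hu i j /eqP; rewrite nth_uniq ?hs // => /eqP; exact: val_inj.
Qed.

Lemma sorted_uniq_val n (s : seq 'I_n) : sorted ltn (map val s) -> uniq s.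
Proof.
move=> h; have := sorted_uniq ltn_trans ltnn h; by rewrite map_inj_uniq //; apply: val_inj.
Qed.

Arguments sorted_uniq_val {n s}.

Lemma cyc_irr a (u w : 'I_a) : 2 <= a -> gadj (mon_cycle a) u w -> u != w.
Proof.
move=> ha; rewrite /=; case: ifP => // /negbT a2 H; apply/eqP => E; subst w.
have := ltn_ord u; move: H a2; lia.
Qed.

Lemma cyc_adj a (u w : 'I_a) : 2 <= a ->
  ((nat_of_ord u).+1 == w) || ((nat_of_ord u == a.-1) && (nat_of_ord w == 0)) -> gadj (mon_cycle a) u w.
Proof.
move=> ha H; rewrite /=; case: ifP => /eqP a2.
  apply/eqP => E; subst w; have := ltn_ord u; move: H; rewrite -subn1; lia.
move: H; rewrite -subn1; lia.
Qed.
Lemma pigeon (T : finType) (f : T -> nat) (A : nat) : forall K (D : {set T}),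
  (forall x, x \in D -> 1 <= f x <= K) ->
  (forall k, #|[set x in D | f x == k]| <= A) -> #|D| <= K * A.
Proof.
elim=> [|K IH] D H1 H2.
  rewrite mul0n leqn0 cards_eq0; apply/eqP/setP => x; rewrite inE.
  by apply/negP => /H1; lia.
rewrite -(cardsID [set x | f x == K.+1] D) mulSn; apply: leq_add.
  apply: leq_trans (H2 K.+1); apply: subset_leq_card; apply/subsetP => x.
  by rewrite !inE => /andP[-> ->].
apply: IH => [x|k].
  by rewrite !inE => /andP[Hn /H1]; lia.
apply: leq_trans (H2 k); apply: subset_leq_card; apply/subsetP => x.
by rewrite !inE => /andP[/andP[_ ->] ->].
Qed.

Section Upper.
Variables (n : nat) (c : 'I_n -> 'I_n -> nat).

Fixpoint F k (v : 'I_n) : nat :=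
  if k is k'.+1 then 1 + \max_(u : 'I_n | (v < u) && (c v u == 2)) F k' u else 1.

Lemma F_stable k1 : forall k2 (v : 'I_n), n - v <= k1 -> n - v <= k2 -> F k1 v = F k2 v.
Proof.
elim: k1 => [|k1 IH] [|k2] v h1 h2 //=; try (have := ltn_ord v; lia).
congr (_ + _); apply: eq_bigr => u /andP[hu _]; apply: IH; lia.
Qed.

Definition f v := F n.+1 v.

Lemma fE v : f v = 1 + \max_(u : 'I_n | (v < u) && (c v u == 2)) f u.
Proof.
rewrite {1}/f /=; congr (_ + _); apply: eq_bigr => u _; apply: F_stable; have := ltn_ord u; lia.
Qed.

Lemma f_lt (u v : 'I_n) : v < u -> c v u = 2 -> f u < f v.
Proof.
move=> h1 h2; rewrite (fE v) add1n ltnS.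
by apply: (leq_bigmax_cond (F := f)); rewrite h1 h2 eqxx.
Qed.

Lemma f_succ v : 2 <= f v -> exists u : 'I_n, [/\ v < u, c v u = 2 & f v = (f u).+1].
Proof.
rewrite fE.
case: (pickP (fun u : 'I_n => (v < u) && (c v u == 2))) => [u0 Hu0|H0].
  have [|u Hu ->] := @eq_bigmax_cond _ (fun u : 'I_n => (v < u) && (c v u == 2)) f.
    by apply/card_gt0P; exists u0.
  move: Hu; rewrite unfold_in => /andP[h1 /eqP h2] _; by exists u.
rewrite big_pred0 //.
Qed.

Lemma f_ge1 v : 1 <= f v.
Proof. by rewrite fE. Qed.

Definition R (x y : 'I_n) := (x < y) && (c x y == 2).

Lemma path_build L : forall v, L < f v -> exists s, size s = L /\ path R v s.
Proof.
elim: L => [|L IH] v h; first by exists [::].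
have [|u [h1 h2 h3]] := f_succ v; first lia.
have [|s [hs hp]] := IH u; first lia.
exists (u :: s); split; first by rewrite /= hs.
by rewrite /= hp /R h1 h2 eqxx.
Qed.

End Upper.

Lemma sorted_enum_set n (S : {set 'I_n}) : sorted ltn (map val (enum S)).
Proof.
rewrite sorted_map /enum_mem -enumT; apply: sorted_filter.
  by move=> x y z /= ; apply: ltn_trans.
by rewrite -sorted_map val_enum_ord iota_ltn_sorted.
Qed.

Lemma upper a b : 2 <= a -> 1 <= b ->
  cyc_ramsey_prop (mon_cycle a) (mon_path b) (1 + (a - 1) * (b - 1)).
Proof.
move=> ha hb c [csym ccol].
set n := 1 + (a - 1) * (b - 1).
have col1 : forall x y : 'I_n, f _ c x = f _ c y -> x != y -> c x y = 1.
  move=> x y hf hxy; case: (ccol x y hxy) => // h2.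
  case: (ltngtP x y) => hl.
  - by have := f_lt _ c y x hl h2; lia.
  - by rewrite csym in h2; have := f_lt _ c x y hl h2; lia.
  - by move/eqP: hxy; case; apply: val_inj.
case: (boolP [exists v, b <= f _ c v]) => [/existsP [v hv] | /existsP hno].
  have [s [hs hp]] := path_build _ c (b.-1) v ltac:(lia).
  right; exists (fun i : 'I_b => nth v (v :: s) i).
  have hso : sorted ltn (map val (v :: s)).
    rewrite /= path_map; apply: sub_path hp => x y /andP[] //.
  have hsz : size (v :: s) = b by rewrite /= hs; lia.
  split; last by apply: (@seq_incr _ _ _ _ (Ordinal hb)).
  split; first exact: (@seq_inj b _ _ _ hsz (sorted_uniq_val hso)).
  have step : forall i, i.+1 < b -> c (nth v (v :: s) i) (nth v (v :: s) i.+1) = 2.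
    move=> i hi; have hi' : i < size s by rewrite hs -subn1; lia.
    move/(pathP v): hp => /(_ i hi') /andP[_ /eqP] //.
  move=> u w /orP[] /eqP E.
    by rewrite -E; apply: step; rewrite E.
  by rewrite csym -E; apply: step; rewrite E.
left.
have {}hno : forall x, f _ c x < b.
  by move=> x; rewrite ltnNge; apply/negP => h; apply: hno; exists x.
have [k hk] : exists k, a <= #|[set x | f _ c x == k]|.
  case: (boolP [exists k : 'I_b, a <= #|[set x | f _ c x == k]|]) => [/existsP [k hk]|/existsP hk].
    by exists (nat_of_ord k).
  have := @pigeon _ (f _ c) (a - 1) (b - 1) setT.
  have -> : #|[set: 'I_n]| = n by rewrite cardsT card_ord.
  move=> H; exfalso; have : n <= (b - 1) * (a - 1); last by rewrite /n; lia.
  apply: H => [x _|kk].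
    by have := f_ge1 _ c x; have := hno x; lia.
  case: (ltnP kk b) => hkb.
    have h' : #|[set x | f _ c x == kk]| < a.
      by rewrite ltnNge; apply/negP => h; apply: hk; exists (Ordinal hkb).
    have -> : [set x in [set: 'I_n] | f _ c x == kk] = [set x | f _ c x == kk].
      by apply/setP => x; rewrite !inE.
    lia.
  suff -> : [set x in [set: 'I_n] | f _ c x == kk] = set0 by rewrite cards0.
  apply/setP => x; rewrite !inE.
  by apply/negP => /eqP E; have := hno x; rewrite E; lia.
set S := [set x | f _ c x == k].
set s := take a (enum S).
have hsz : size s = a by rewrite size_takel // -cardE.
have hso : sorted ltn (map val s) by rewrite /s map_take; apply: take_sorted; apply: sorted_enum_set.
have x0 : 'I_n by exact: ord0.
exists (fun i : 'I_a => nth x0 s i).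
split; last by apply: (@seq_incr _ _ _ _ (Ordinal (ltnW ha))).
have hu := sorted_uniq_val hso.
have hinj := @seq_inj _ _ _ x0 hsz hu.
split; first by [].
move=> u w huw; apply: col1.
  have memS : forall i : 'I_a, nth x0 s i \in S.
    move=> i; have : nth x0 s i \in s by apply: mem_nth; rewrite hsz.
    by move/mem_take; rewrite mem_enum.
  by have := memS u; have := memS w; rewrite !inE => /eqP -> /eqP ->.
by apply/eqP => /hinj E; move: (cyc_irr _ _ _ ha huw); rewrite E eqxx.
Qed.


Lemma path_div m d (x : 'I_m) s :
  path (fun y z : 'I_m => y %/ d != z %/ d) x s ->
  path (fun y z : 'I_m => y < z) x s -> x %/ d + size s <= (last x s) %/ d.
Proof.
elim: s x => [|y s IH] x /=; first by rewrite addn0.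
move=> /andP[h1 p1] /andP[h2 p2]; have := IH y p1 p2.
have := leq_div2r d (ltnW h2); move: h1; lia.
Qed.

Lemma lower a b m : 2 <= a -> 1 <= b -> m < 1 + (a - 1) * (b - 1) ->
  ~ cyc_ramsey_prop (mon_cycle a) (mon_path b) m.
Proof.
move=> ha hb hm H.
set d := b - 1.
pose c := fun i j : 'I_m => if i %/ d == j %/ d then 2 else 1.
have two : two_coloring m c.
  split; first by move=> i j; rewrite /c eq_sym.
  by move=> i j _; rewrite /c; case: ifP; auto.
have hdm : 0 < m -> 0 < d.
  move=> hm0; rewrite /d; case E: (b - 1) => //; move: hm; rewrite -/d.
  by rewrite /d E muln0; lia.
case: (H c two) => [[phi [[inj emb] [t hs]]] | [phi [[inj emb] _]]].
-
  have a0 : 0 < a by lia.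
  have hm0 : 0 < m by have := ltn_ord (phi (Ordinal a0)); lia.
  have hd := hdm hm0.
  pose E := fun x y : 'I_m => x %/ d != y %/ d.
  have emb1 : forall u w : 'I_a, gadj (mon_cycle a) u w -> E (phi u) (phi w).
    by move=> u w /emb; rewrite /c /E; case: eqP.
  set x0 := phi (Ordinal a0).
  set p := map phi (enum 'I_a).
  have hsp : size p = a by rewrite size_map size_enum_ord.
  have nthE : forall k (hk : k < a), nth x0 p k = phi (Ordinal hk).
    move=> k hk; rewrite (nth_map (Ordinal a0)) ?size_enum_ord //; congr phi.
    by apply: val_inj; rewrite /= nth_enum_ord.
  have cyc : cycle E p.
    rewrite (cycle_path x0); apply/(pathP x0); rewrite hsp => -[|i] hi /=.
      rewrite -nth_last hsp.
      have h1 : a.-1 < a by rewrite -subn1; lia.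
      rewrite (nthE _ h1) (nthE _ a0); apply: emb1; apply: cyc_adj => //=.
      by rewrite !eqxx.
    have h1 : i < a by lia.
    by rewrite (nthE _ h1) (nthE _ hi); apply: emb1; apply: cyc_adj => //=; rewrite eqxx.
  have : cycle E (rot t p) by rewrite rot_cycle.
  have hs' : sorted ltn (map val (rot t p)) by move: hs; rewrite /p -map_rot -map_comp.
  have := size_rot t p.
  case E0: (rot t p) hs' => [|x s] /=; first by rewrite hsp; lia.
  move=> hso hsz; rewrite rcons_path => /andP[pe _].
  move: hso; rewrite path_map => pl.
  have := path_div _ _ _ _ pe pl.
  have hl : last x s %/ d < a - 1.
    by rewrite ltn_divLR //; have := ltn_ord (last x s); move: hm; rewrite -/d; nia.
  rewrite hsp in hsz; move: hsz hl; move: (x %/ d) (last x s %/ d) => q1 q2; lia.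
-
  have hb0 : 0 < b by [].
  have hm0 : 0 < m by have := ltn_ord (phi (Ordinal hb0)); lia.
  have hd := hdm hm0.
  set i0 : 'I_b := Ordinal hb0.
  have same : forall i : 'I_b, phi i %/ d = phi i0 %/ d.
    move=> [k hk]; elim: k hk => [|k IH] hk.
      by congr (_ %/ _); congr (nat_of_ord (phi _)); apply: val_inj.
    rewrite -(IH (ltnW hk)).
    have := emb (Ordinal (ltnW hk)) (Ordinal hk); rewrite /= eqxx /= /c => /(_ isT).
    by case: eqP.
  pose psi := fun i : 'I_b => (Ordinal (ltn_pmod (phi i) hd) : 'I_d).
  have psi_inj : injective psi.
    move=> i j /(congr1 val) /= E; apply: inj; apply: val_inj; change (nat_of_ord (phi i) = nat_of_ord (phi j)).
    by rewrite (divn_eq (phi i) d) (divn_eq (phi j) d) E !same.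
  have := leq_card _ psi_inj; rewrite !card_ord /d; lia.
Qed.

Theorem theorem4p12 (a b : nat) :
  2 <= a -> 1 <= b ->
  is_Rcyc (mon_cycle a) (mon_path b) (1 + (a - 1) * (b - 1)).
Proof.
move=> ha hb; split; first exact: upper.
by move=> m hm; apply: lower.
Qed.
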